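(* Let $(G,E)$ be a connected simple graph and $d,\rho$ metrics on $G$ such that $d$ is quasisymmetric to $\rho$. If $d$ fits to $(G,E)$, then $\rho$ fits to $(G,E)$.
   Context: $d$ is quasisymmetric to $\rho$ if there is a homeomorphism $\theta:[0,\infty)\to[0,\infty)$ with $\rho(x,y)/\rho(x,z)\le\theta(d(x,y)/d(x,z))$ for all $x,y,z$ with $x\ne z$. A metric $d$ fits to $(G,E)$ if (F1) there is $C>0$ with $d(x,y)\le Cd(x,z)$ for all $x,y,z$ with $x\sim y$ and $x\ne z$; and (F2) for every $\epsilon>0$ there exist $r>0$, $n\ge1$ and $x_0,\dots,x_n\in G$ with $x_i\in B_d(x_0,r)$ for $i\in[0,n-1]$, $x_n\notin B_d(x_0,r)$, and $d(x_i,x_{i-1})\le\epsilon r$, $x_i\sim x_{i-1}$ for $i\in[1,n]$. *)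

(* Defs.v *)
From Stdlib Require Import Reals Relations.
Open Scope R_scope.

Definition is_metric {V : Type} (d : V -> V -> R) : Prop :=
  (forall x y, 0 <= d x y) /\
  (forall x y, d x y = 0 <-> x = y) /\
  (forall x y, d x y = d y x) /\
  (forall x y z, d x z <= d x y + d y z).

Definition simple_graph {V : Type} (E : V -> V -> Prop) : Prop :=
  (forall x y, E x y -> E y x) /\ (forall x, ~ E x x).

Definition connected_graph {V : Type} (E : V -> V -> Prop) : Prop :=
  forall x y : V, clos_refl_trans V E x y.

Definition cont_on_nonneg (f : R -> R) : Prop :=
  forall x, 0 <= x -> forall eps, 0 < eps -> exists delta, 0 < delta /\
    forall y, 0 <= y -> Rabs (y - x) < delta -> Rabs (f y - f x) < eps.

Definition homeo_nonneg (theta : R -> R) : Prop :=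
  exists g : R -> R,
    (forall x, 0 <= x -> 0 <= theta x) /\
    (forall y, 0 <= y -> 0 <= g y) /\
    (forall x, 0 <= x -> g (theta x) = x) /\
    (forall y, 0 <= y -> theta (g y) = y) /\
    cont_on_nonneg theta /\ cont_on_nonneg g.

Definition quasisymmetric {V : Type} (d rho : V -> V -> R) : Prop :=
  exists theta : R -> R, homeo_nonneg theta /\
    forall x y z : V, x <> z ->
      rho x y / rho x z <= theta (d x y / d x z).

Definition ball_d {V : Type} (d : V -> V -> R) (x : V) (r : R) (y : V) : Prop :=
  d x y < r.

Definition fits {V : Type} (d : V -> V -> R) (E : V -> V -> Prop) : Prop :=
  (exists C, 0 < C /\ forall x y z : V, E x y -> x <> z -> d x y <= C * d x z) /\
  (forall eps, 0 < eps -> exists (r : R) (n : nat) (xs : nat -> V),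
      0 < r /\ (1 <= n)%nat /\
      (forall i, (i <= n - 1)%nat -> ball_d d (xs 0%nat) r (xs i)) /\
      ~ ball_d d (xs 0%nat) r (xs n) /\
      (forall i, (1 <= i <= n)%nat ->
         d (xs i) (xs (i - 1)%nat) <= eps * r /\ E (xs i) (xs (i - 1)%nat))).

(* Main.v *)
Require Import Defs.
From Stdlib Require Import Reals.
From Stdlib Require Import Lra Lia.
Open Scope R_scope.

Lemma Rmax_lip x y : Rabs (Rmax 0 y - Rmax 0 x) <= Rabs (y - x).
Proof.
  unfold Rmax; destruct (Rle_dec 0 y); destruct (Rle_dec 0 x);
  unfold Rabs; repeat match goal with |- context [Rcase_abs ?a] => destruct (Rcase_abs a) end; lra.
Qed.

Lemma cont_ext f : cont_on_nonneg f -> continuity (fun t => f (Rmax 0 t)).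
Proof.
  intros Hc x. unfold continuity_pt, continue_in, limit1_in, limit_in.
  intros eps Heps. simpl.
  destruct (Hc (Rmax 0 x) (Rmax_l 0 x) eps Heps) as [del [Hd H]].
  exists del. split; auto. intros y [_ Hy]. unfold R_dist in *.
  apply H. apply Rmax_l. eapply Rle_lt_trans; [|exact Hy]. apply Rmax_lip.
Qed.

Lemma theta0 th : homeo_nonneg th -> th 0 = 0.
Proof.
  intros [g [Hp [Hg [Hgt [Htg [Hc _]]]]]].
  set (te := fun t => th (Rmax 0 t)).
  assert (Hte : forall t, 0 <= t -> te t = th t).
  { intros t Ht. unfold te. rewrite Rmax_right; auto. }
  assert (Ct : continuity te) by (apply cont_ext; auto).
  destruct (Rle_lt_or_eq_dec 0 (th 0) (Hp 0 (Rle_refl 0))) as [Ha|Ha]; [|auto].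
  exfalso. remember (th 0) as a eqn:Hadef.
  set (b := g 0). set (p := g (2*a)).
  assert (Hb0 : 0 <= b) by (apply Hg; lra).
  assert (Hp0 : 0 <= p) by (apply Hg; lra).
  assert (Hthb : th b = 0) by (apply Htg; lra).
  assert (Hthp : th p = 2*a) by (apply Htg; lra).
  assert (bpos : 0 < b).
  { destruct (Rle_lt_or_eq_dec 0 b Hb0) as [h|h]; auto. rewrite <- h in Hthb. lra. }
  assert (ppos : 0 < p).
  { destruct (Rle_lt_or_eq_dec 0 p Hp0) as [h|h]; auto. rewrite <- h in Hthp. lra. }
  destruct (Rtotal_order p b) as [Hl|[He|Hl]].
  - destruct (IVT (fun t => a - te t) p b) as [z [Hz Hfz]].
    + apply continuity_minus; [apply continuity_const; intros ??; auto|auto].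
    + auto.
    + rewrite Hte; lra.
    + rewrite Hte; lra.
    + rewrite Hte in Hfz by lra.
      assert (z = 0). { rewrite <- (Hgt z) by lra. rewrite <- (Hgt 0) by lra. f_equal. lra. }
      lra.
  - rewrite He in Hthp. lra.
  - destruct (IVT (fun t => te t - a) b p) as [z [Hz Hfz]].
    + apply continuity_minus; [auto|apply continuity_const; intros ??; auto].
    + auto.
    + rewrite Hte; lra.
    + rewrite Hte; lra.
    + rewrite Hte in Hfz by lra.
      assert (z = 0). { rewrite <- (Hgt z) by lra. rewrite <- (Hgt 0) by lra. f_equal. lra. }
      lra.
Qed.

Lemma argmax (f : nat -> R) (n : nat) :
  exists k, (k <= n)%nat /\ (forall j, (j <= n)%nat -> f j <= f k) /\
            (forall j, (j < k)%nat -> f j < f k).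
Proof.
  induction n as [|n IH].
  - exists 0%nat. split; [lia|split]. intros j Hj. replace j with 0%nat by lia. lra.
    intros; lia.
  - destruct IH as [k [Hk [H1 H2]]].
    destruct (Rlt_le_dec (f k) (f (S n))) as [h|h].
    + exists (S n). split; [lia|split].
      * intros j Hj. destruct (Nat.eq_dec j (S n)) as [->|]; [lra|].
        specialize (H1 j ltac:(lia)). lra.
      * intros j Hj. specialize (H1 j ltac:(lia)). lra.
    + exists k. split; [lia|split]; auto.
      intros j Hj. destruct (Nat.eq_dec j (S n)) as [->|]; auto. apply H1; lia.
Qed.

Lemma div_nonneg a b : 0 <= a -> 0 < b -> 0 <= a / b.
Proof. intros. unfold Rdiv. apply Rmult_le_pos; [auto|left; apply Rinv_0_lt_compat; auto]. Qed.

Lemma div_bound a b T : 0 < b -> a / b <= T -> a <= T * b.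
Proof.
  intros Hb H. replace a with ((a / b) * b) by (field; lra).
  apply Rmult_le_compat_r; lra.
Qed.

Theorem lemma4p1 (V : Type) (E : V -> V -> Prop) (d rho : V -> V -> R) :
  simple_graph E -> connected_graph E ->
  is_metric d -> is_metric rho ->
  quasisymmetric d rho ->
  fits d E -> fits rho E.
Proof.
  intros _ _ [dp [d0 [ds dt]]] [rp [r0 [rs rt]]] [th [Hh Hq]] [[C [HC F1]] F2].
  assert (th0 := theta0 th Hh).
  destruct Hh as [g [Hp [_ [_ [_ [Hc _]]]]]].
  assert (dpos : forall x z, x <> z -> 0 < d x z).
  { intros x z H. destruct (Rle_lt_or_eq_dec _ _ (dp x z)) as [h|h]; auto.
    exfalso; apply H, d0; auto. }
  assert (rpos : forall x z, x <> z -> 0 < rho x z).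
  { intros x z H. destruct (Rle_lt_or_eq_dec _ _ (rp x z)) as [h|h]; auto.
    exfalso; apply H, r0; auto. }
  split.
  - set (te := fun t => th (Rmax 0 t)).
    destruct (continuity_ab_maj te 0 C ltac:(lra) (fun c _ => cont_ext th Hc c))
      as [Mx [HM _]].
    exists (Rmax (te Mx) 1). split.
    { eapply Rlt_le_trans; [|apply Rmax_r]. lra. }
    intros x y z Hxy Hxz.
    assert (Hdz := dpos _ _ Hxz). assert (Hrz := rpos _ _ Hxz).
    set (q := d x y / d x z).
    assert (q0 : 0 <= q) by (unfold q; apply div_nonneg; auto).
    assert (qC : q <= C).
    { unfold q. apply (Rmult_le_reg_r (d x z)); auto.
      unfold Rdiv. rewrite Rmult_assoc, Rinv_l, Rmult_1_r by lra. auto. }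
    assert (Hb : th q <= te Mx).
    { specialize (HM q (conj q0 qC)). unfold te in HM. rewrite Rmax_right in HM; auto. }
    assert (Hq1 := Hq x y z Hxz). fold q in Hq1. apply div_bound in Hq1; auto. rename Hq1 into Hq0.
    eapply Rle_trans; [exact Hq0|]. apply Rmult_le_compat_r; [lra|].
    eapply Rle_trans; [exact Hb|apply Rmax_l].
  - intros eps Heps.
    destruct (Hc 0 (Rle_refl 0) (eps/2) ltac:(lra)) as [del [Hdel Hcd]].
    destruct (F2 (del/4) ltac:(lra)) as [r [n [xs [Hr [Hn [Hin [Hout Hstep]]]]]]].
    unfold ball_d in *.
    set (f := fun j => rho (xs 0%nat) (xs j)).
    destruct (argmax f n) as [m [Hmn [Hmax Hleast]]].
    assert (Hdn : r <= d (xs 0%nat) (xs n)) by lra.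
    assert (Hm1 : (1 <= m)%nat).
    { destruct m; [|lia]. exfalso.
      specialize (Hmax n (le_n n)). unfold f in Hmax. rewrite (proj2 (r0 _ _) eq_refl) in Hmax.
      assert (rho (xs 0%nat) (xs n) = 0) by (specialize (rp (xs 0%nat) (xs n)); lra).
      apply r0 in H. rewrite H in Hdn. rewrite (proj2 (d0 _ _) eq_refl) in Hdn. lra. }
    exists (f m), m, xs.
    assert (HMpos : 0 < f m).
    { specialize (Hleast 0%nat ltac:(lia)). unfold f in Hleast |- *.
      rewrite (proj2 (r0 _ _) eq_refl) in Hleast. lra. }
    split; [auto|split; [auto|split; [|split]]].
    + intros i Hi. unfold ball_d. apply (Hleast i). lia.
    + unfold ball_d. fold (f m). lra.
    + intros i Hi. destruct (Hstep i ltac:(lia)) as [Hd1 HE]. split; [|auto].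
      assert (Hz : exists z, (z = xs 0%nat \/ z = xs n) /\ r/2 <= d (xs i) z).
      { assert (T := dt (xs 0%nat) (xs i) (xs n)). rewrite (ds (xs 0%nat) (xs i)) in T.
        destruct (Rle_dec (r/2) (d (xs i) (xs 0%nat))).
        - exists (xs 0%nat); auto.
        - exists (xs n); split; auto; lra. }
      destruct Hz as [z [Hzc Hdz]].
      assert (Hneq : xs i <> z).
      { intro h. rewrite h in Hdz. rewrite (proj2 (d0 _ _) eq_refl) in Hdz. lra. }
      assert (Hrz := rpos _ _ Hneq).
      set (q := d (xs i) (xs (i-1)%nat) / d (xs i) z).
      assert (q0 : 0 <= q) by (unfold q; apply div_nonneg; auto; lra).
      assert (qd : q < del).
      { unfold q. apply (Rmult_lt_reg_r (d (xs i) z)); [lra|].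
        unfold Rdiv. rewrite Rmult_assoc, Rinv_l, Rmult_1_r by lra. nra. }
      assert (Htq : th q < eps/2).
      { specialize (Hcd q q0 ltac:(rewrite Rminus_0_r, Rabs_right; lra)).
        rewrite th0, Rminus_0_r in Hcd. apply Rabs_def2 in Hcd. lra. }
      assert (H1 := Hq (xs i) (xs (i-1)%nat) z Hneq). fold q in H1.
      apply div_bound in H1; auto.
      assert (Hfz : rho (xs 0%nat) z <= f m).
      { destruct Hzc as [->| ->]; [|apply Hmax; lia].
        rewrite (proj2 (r0 _ _) eq_refl). lra. }
      assert (Hfi : rho (xs i) (xs 0%nat) <= f m).
      { rewrite rs. apply (Hmax i). lia. }
      assert (Tz := rt (xs i) (xs 0%nat) z).
      nra.
Qed.
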